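(* Let $\mu$ be a nonvanishing differentiable real function and $\omega^2$ a real function of $t$. The initial value problem for the variable parametric potential Burgers equation $$\frac{\partial\Upsilon}{\partial t}+\frac{\dot\mu(t)}{\mu(t)}\Upsilon+\frac12\Big(\frac{\partial\Upsilon}{\partial x}\Big)^2=\frac{1}{2\mu(t)}\frac{\partial^2\Upsilon}{\partial x^2}-\frac{\omega^2(t)}{2}x^2,\qquad \Upsilon(x,t)|_{t=t_0}=\Upsilon(x,t_0),$$ has the formal solution $\Upsilon(x,t)=-\frac{1}{\mu(t)}\ln\Phi(x,t)$, where $\Phi(x,t)$ satisfies the initial value problem for the variable parametric parabolic equation $$\frac{\partial\Phi}{\partial t}=\frac{1}{2\mu(t)}\frac{\partial^2\Phi}{\partial x^2}+\frac{\mu(t)\omega^2(t)}{2}x^2\Phi,\qquad \Phi(x,t_0)=\exp\big(-\mu(t_0)\Upsilon(x,t_0)\big).$$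
   Context: Dots denote $t$-derivatives. *)

(* Defs.v *)
From Stdlib Require Import Reals.
From Coquelicot Require Import Coquelicot.
Open Scope R_scope.

Definition d_t (F : R -> R -> R) (x t : R) : R := Derive (fun s => F x s) t.
Definition d_x (F : R -> R -> R) (x t : R) : R := Derive (fun y => F y t) x.
Definition d_xx (F : R -> R -> R) (x t : R) : R := Derive (fun y => d_x F y t) x.

Definition upsilon_of (mu : R -> R) (Phi : R -> R -> R) (x t : R) : R :=
  - (1 / mu t) * ln (Phi x t).

(* Main.v *)
Require Import Defs.
From Stdlib Require Import Reals Lra FunctionalExtensionality.
From Coquelicot Require Import Coquelicot.
Open Scope R_scope.

Theorem proposition4
  (mu omega2 : R -> R) (t0 : R) (Ups0 : R -> R) (Phi : R -> R -> R)
  (Hmu_nz : forall t, mu t <> 0)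
  (Hmu_diff : forall t, ex_derive mu t)
  (HPhi_pos : forall x t, 0 < Phi x t)
  (HPhi_t : forall x t, ex_derive (fun s => Phi x s) t)
  (HPhi_x : forall x t, ex_derive (fun y => Phi y t) x)
  (HPhi_xx : forall x t, ex_derive (fun y => d_x Phi y t) x)
  (HPhi_pde : forall x t,
     d_t Phi x t = 1 / (2 * mu t) * d_xx Phi x t
                   + mu t * omega2 t / 2 * x ^ 2 * Phi x t)
  (HPhi_init : forall x, Phi x t0 = exp (- (mu t0 * Ups0 x))) :
  let Ups := upsilon_of mu Phi in
  (forall x t,
     ex_derive (fun s => Ups x s) t /\
     ex_derive (fun y => Ups y t) x /\
     ex_derive (fun y => d_x Ups y t) x /\
     d_t Ups x t + Derive mu t / mu t * Ups x t + 1 / 2 * (d_x Ups x t) ^ 2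
       = 1 / (2 * mu t) * d_xx Ups x t - omega2 t / 2 * x ^ 2) /\
  (forall x, Ups x t0 = Ups0 x).
Proof.
  intros Ups.
  assert (Dx : forall y t, is_derive (fun y => Ups y t) y
                 (- (1 / mu t) * (d_x Phi y t / Phi y t))).
  { intros y t. unfold Ups, upsilon_of, d_x.
    pose proof (HPhi_pos y t). pose proof (HPhi_x y t).
    auto_derive. { repeat split; auto. } unfold Rdiv; ring. }
  assert (Dxe : forall t, (fun y => d_x Ups y t) =
                 (fun y => - (1 / mu t) * (d_x Phi y t / Phi y t))).
  { intros t. apply functional_extensionality. intros y.
    unfold d_x at 1. apply is_derive_unique. apply Dx. }
  assert (Dxx : forall y t, is_derive (fun y => d_x Ups y t) y
      (- (1 / mu t) * (d_xx Phi y t / Phi y t - (d_x Phi y t / Phi y t) ^ 2))).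
  { intros y t. rewrite Dxe. pose proof (HPhi_pos y t).
    pose proof (HPhi_x y t) as Hx. pose proof (HPhi_xx y t) as Hxx.
    unfold d_xx.
    assert (E : d_x Phi y t = Derive (fun y => Phi y t) y) by reflexivity.
    auto_derive. { repeat split; auto; lra. }
    unfold d_x. field. split; [lra|auto]. }
  assert (Dt : forall x t, is_derive (fun s => Ups x s) t
      (Derive mu t / (mu t)^2 * ln (Phi x t) - (1 / mu t) * (d_t Phi x t / Phi x t))).
  { intros x t. unfold Ups, upsilon_of, d_t.
    pose proof (HPhi_pos x t). pose proof (HPhi_t x t). pose proof (Hmu_diff t).
    pose proof (Hmu_nz t).
    auto_derive. { repeat split; auto. } change (fun x0 : R => mu x0) with mu. field. split; [lra|auto]. }
  split.
  - intros x t. split; [eexists; apply Dt|].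
    split; [eexists; apply Dx|]. split; [eexists; apply Dxx|].
    rewrite (is_derive_unique _ _ _ (Dt x t) : d_t Ups x t = _).
    rewrite (is_derive_unique _ _ _ (Dxx x t) : d_xx Ups x t = _).
    rewrite (is_derive_unique _ _ _ (Dx x t) : d_x Ups x t = _).
    rewrite HPhi_pde. unfold Ups, upsilon_of.
    pose proof (HPhi_pos x t). pose proof (Hmu_nz t).
    field. split; [lra|auto].
  - intros x. unfold Ups, upsilon_of. rewrite HPhi_init, ln_exp.
    field. apply Hmu_nz.
Qed.
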